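(* Let $H$ be a graph with at least one edge and no isolated vertices, and let $t\ge 1$. Let $C$ be the graph obtained from $\mu_t(H)$ by adding $\ell\ge 1$ new vertices $x_1,\dots,x_\ell$, each adjacent only to the root $w$ of $\mu_t(H)$. If $S$ is a subset of $V(\mu_t(H))\setminus\{w\}$ of minimum size among those subsets $S'$ for which $S'\cup\{w\}$ is a determining set for $\mu_t(H)$, then $S\cup\{x_2,\dots,x_\ell\}$ is a minimum size determining set for $C$.
   Context: All graphs are finite and simple. For a graph $G$ with $V(G)=\{v_1,\dots,v_n\}$ and an integer $t\ge1$, the generalized Mycielskian $\mu_t(G)$ has vertex set $\{u_i^s: 1\le i\le n,\ 0\le s\le t\}\cup\{w\}$, where $u_i^0$ is identified with $v_i$. Its edges are: $u_i^0u_j^0$ for each edge $v_iv_j$ of $G$; $u_i^su_j^{s+1}$ and $u_j^su_i^{s+1}$ for each edge $v_iv_j$ of $G$ and each $0\le s<t$; and $u_i^tw$ for all $1\le i\le n$. The vertex $w$ is called the root, and $u_i^s$ is the shadow of $v_i$ at level $s$. A set $S\subseteq V(G)$ is a determining set for $G$ if the only automorphism of $G$ fixing every vertex of $S$ is the identity. *)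

(* Defs.v *)
From mathcomp Require Import all_boot all_fingroup.
Set Implicit Arguments. Unset Strict Implicit. Unset Printing Implicit Defensive.

(* A simple graph: a finType T with a symmetric irreflexive relation e. *)

(* Vertices of mu_t(G): None is the root w, Some (s, v) is the shadow u_v^s
   of v at level s (0 <= s <= t); level 0 is identified with V(G). *)
Definition myc_vertex (T : finType) (t : nat) : finType :=
  option ('I_t.+1 * T)%type.

Definition myc_adj (T : finType) (e : rel T) (t : nat) : rel (myc_vertex T t) :=
  fun x y =>
    match x, y with
    | Some (s, a), Some (r, b) =>
        e a b && [|| ((s : nat) == 0%N) && ((r : nat) == 0%N),
                     (s.+1 == r) | (r.+1 == s)]
    | None, Some (r, _) => (r : nat) == t
    | Some (s, _), None => (s : nat) == t
    | None, None => false
    end.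

(* Vertices of C: inl x for x in mu_t(G), inr i for the pendant vertex x_{i+1}
   (i : 'I_l), adjacent only to the root. *)
Definition pend_vertex (T : finType) (t l : nat) : finType :=
  (myc_vertex T t + 'I_l)%type.

Definition pend_adj (T : finType) (e : rel T) (t l : nat) : rel (pend_vertex T t l) :=
  fun x y =>
    match x, y with
    | inl a, inl b => @myc_adj T e t a b
    | inl a, inr _ => a == None
    | inr _, inl b => b == None
    | inr _, inr _ => false
    end.

Definition is_aut (V : finType) (g : rel V) (p : {perm V}) : Prop :=
  forall x y, g (p x) (p y) = g x y.

Definition determining (V : finType) (g : rel V) (S : {set V}) : Prop :=
  forall p : {perm V}, is_aut g p -> (forall x, x \in S -> p x = x) -> p = 1%g.

Definition min_determining (V : finType) (g : rel V) (S : {set V}) : Prop :=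
  determining g S /\ (forall S' : {set V}, determining g S' -> #|S| <= #|S'|).

Arguments myc_adj {T} e t.
Arguments pend_adj {T} e t l.

(* Main.v *)
Require Import Defs.
From mathcomp Require Import all_boot all_fingroup.
From mathcomp Require Import zify.
Set Implicit Arguments. Unset Strict Implicit. Unset Printing Implicit Defensive.

Lemma card_sum_split (X Y : finType) (A : {set X}) (B : {set Y}) :
  #|([set inl x | x in A] :|: [set inr y | y in B] : {set (X + Y)%type})| = #|A| + #|B|.
Proof.
rewrite -[LHS]addn0 -(cards0 (X + Y)%type).
have -> : (set0 : {set (X+Y)%type}) = [set inl x | x in A] :&: [set inr y | y in B].
  apply/setP=> z; rewrite !inE; apply/esym/negbTE/andP => [[/imsetP [x _ ->] /imsetP [y _]]] //.
rewrite cardsUI !card_imset //; by move=> ? ? [].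
Qed.

Lemma aut_inv (V : finType) (g : rel V) (p : {perm V}) : is_aut g p -> is_aut g p^-1.
Proof. move=> Hp x y; by rewrite -Hp !permKV. Qed.

Definition single (V : finType) (g : rel V) x := exists y, forall z, g x z = (z == y).

Lemma aut_single (V : finType) (g : rel V) (p : {perm V}) x :
  is_aut g p -> single g x -> single g (p x).
Proof.
move=> Hp [y Hy]; exists (p y) => z.
rewrite -{1}(permKV p z) Hp Hy; apply/eqP/eqP => [<-|->]; by rewrite ?permKV ?permK.
Qed.

Lemma single_inr (T : finType) (e : rel T) t l (i : 'I_l) :
  single (pend_adj e t l) (inr i).
Proof. by exists (inl None); case => //. Qed.

Lemma not_single_inl (T : finType) (e : rel T) t l
  (no_isolated : forall a, exists b, e a b) (a0 : T) (ht : 1 <= t) (hl : 0 < l)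
  (x : myc_vertex T t) : ~ single (pend_adj e t l) (inl x).
Proof.
move=> [y Hy].
have key : forall z1 z2, pend_adj e t l (inl x) z1 -> pend_adj e t l (inl x) z2 -> z1 = z2.
  move=> z1 z2 h1 h2; move: (Hy z1) (Hy z2); rewrite h1 h2 => /esym/eqP -> /esym/eqP ->; done.
case: x key {Hy} => [[s a]|] key.
- have [b hab] := no_isolated a.
  have h2 : pend_adj e t l (inl (Some (s, a)))
              (inl (Some (if (s : nat) == 0 then s else inord s.-1, b))).
    rewrite /= /myc_adj hab /=; case: eqP => [->|hs] //=.
    rewrite inordK; last by apply: leq_ltn_trans (leq_pred _) (ltn_ord s).
    rewrite prednK ?eqxx ?orbT //; by case: (s : nat) hs.
  case: (ltnP s t) => hst.
  + have h1 : pend_adj e t l (inl (Some (s, a))) (inl (Some (inord s.+1, b))).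
      by rewrite /= /myc_adj hab /= inordK ?eqxx ?orbT.
    have := key _ _ h1 h2; case=> /(congr1 val) /=.
    have hs1 : s.+1 < t.+1 by [].
    case: ifP => hs0; rewrite inordK //.
      by move=> /eqP; rewrite (eqP hs0).
    rewrite inordK; last by have := ltn_ord s; lia.
    move: hs0 => /negbT; lia.
  + have h1 : pend_adj e t l (inl (Some (s, a))) (inl None).
      rewrite /= /myc_adj; apply/eqP; have := ltn_ord s; lia.
    by have := key _ _ h1 h2.
- have h1 : pend_adj e t l (inl None) (inr (Ordinal hl)) by [].
  have h2 : pend_adj e t l (inl None) (inl (Some (ord_max, a0))) by rewrite /= /myc_adj /=.
  by have := key _ _ h1 h2.
Qed.

Lemma aut_inr (T : finType) (e : rel T) t l (no_isolated : forall a, exists b, e a b)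
  (a0 : T) (ht : 1 <= t) (hl : 0 < l) (p : {perm pend_vertex T t l}) :
  is_aut (pend_adj e t l) p -> forall i, exists j, p (inr i) = inr j.
Proof.
move=> Hp i; have := aut_single Hp (single_inr e t i).
case: (p (inr i)) => [x|j] H; last by exists j.
by case: (not_single_inl no_isolated a0 ht hl H).
Qed.

Lemma aut_inl (T : finType) (e : rel T) t l (no_isolated : forall a, exists b, e a b)
  (a0 : T) (ht : 1 <= t) (hl : 0 < l) (p : {perm pend_vertex T t l}) :
  is_aut (pend_adj e t l) p -> forall x, exists y, p (inl x) = inl y.
Proof.
move=> Hp x; case E: (p (inl x)) => [y|j]; first by exists y.
have := aut_single (aut_inv Hp) (single_inr e t j).
rewrite -E permK => H.
by case: (not_single_inl no_isolated a0 ht hl H).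
Qed.

Lemma aut_root (T : finType) (e : rel T) t l (no_isolated : forall a, exists b, e a b)
  (a0 : T) (ht : 1 <= t) (hl : 0 < l) (p : {perm pend_vertex T t l}) :
  is_aut (pend_adj e t l) p -> p (inl None) = inl None.
Proof.
move=> Hp; have [j Ej] := aut_inr no_isolated a0 ht hl Hp (Ordinal hl).
have : pend_adj e t l (p (inr (Ordinal hl))) (p (inl None)) by rewrite Hp.
rewrite Ej; case: (p (inl None)) => [b|k] //= /eqP -> //.
Qed.

Lemma restrict_perm (T : finType) (e : rel T) t l (no_isolated : forall a, exists b, e a b)
  (a0 : T) (ht : 1 <= t) (hl : 0 < l) (p : {perm pend_vertex T t l}) :
  is_aut (pend_adj e t l) p ->
  exists q : {perm myc_vertex T t}, is_aut (myc_adj e t) q /\ forall x, p (inl x) = inl (q x).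
Proof.
move=> Hp.
pose f (x : myc_vertex T t) := if p (inl x) is inl y then y else x.
have Hf x : p (inl x) = inl (f x).
  rewrite /f; have [y ->] := aut_inl no_isolated a0 ht hl Hp x; done.
have f_inj : injective f.
  move=> x y E; have : p (inl x) = p (inl y) by rewrite !Hf E.
  by move/perm_inj => [].
exists (perm f_inj); split => [x y|x]; last by rewrite permE Hf.
by rewrite !permE -[RHS](Hp (inl x) (inl y)) !Hf.
Qed.

Theorem mainTheorem1 (T : finType) (e : rel T)
  (e_sym : symmetric e) (e_irr : irreflexive e)
  (has_edge : exists a b, e a b)
  (no_isolated : forall a, exists b, e a b)
  (t : nat) (ht : 1 <= t) (l : nat) (hl : 1 <= l)
  (S : {set myc_vertex T t})
  (hSw : None \notin S)
  (hSdet : determining (myc_adj e t) (None |: S))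
  (hSmin : forall S' : {set myc_vertex T t}, None \notin S' ->
             determining (myc_adj e t) (None |: S') -> #|S| <= #|S'|) :
  min_determining (pend_adj e t l)
    ([set inl x | x in S] :|: [set inr i | i : 'I_l & 0 < (i : nat)]).
Proof.
have [a0 _] := has_edge.
set z0 : 'I_l := Ordinal hl.
have Bset : [set i : 'I_l | 0 < (i : nat)] = [set~ z0].
  apply/setP => i; rewrite !inE; apply/idP/idP.
    by move=> h; apply/eqP => E; move: h; rewrite E.
  by move=> h; rewrite lt0n; apply: contra h => /eqP h; apply/eqP/val_inj.
split.
- move=> p Hp Hfix.
  have [q [Hq Eq]] := restrict_perm no_isolated a0 ht hl Hp.
  have q1 : q = 1%g.
    apply: hSdet => // x; rewrite !inE => /orP [/eqP ->|xS].
      by have := aut_root no_isolated a0 ht hl Hp; rewrite Eq => [[]].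
    by have := Hfix (inl x); rewrite Eq inE imset_f // => /(_ isT) [].
  apply/permP => [[x|i]]; first by rewrite Eq q1 !perm1.
  rewrite perm1.
  have fixr (k : 'I_l) : 0 < (k : nat) -> p (inr k) = inr k.
    by move=> hk; apply: Hfix; rewrite inE; apply/orP; right; apply: imset_f; rewrite inE.
  case: (posnP i) => hi; last exact: fixr.
  have [j Ej] := aut_inr no_isolated a0 ht hl Hp i.
  case: (posnP j) => hj.
    by rewrite Ej; congr inr; apply: val_inj; rewrite /= hi hj.
  by have := fixr j hj; rewrite -Ej => /perm_inj.
- move=> S' HS'.
  set A := [set x | inl x \in S'].
  set B := [set i | inr i \in S'].
  have ES' : S' = [set inl x | x in A] :|: [set inr i | i in B].
    apply/setP => [[x|i]]; rewrite !inE; apply/idP/idP.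
    + by move=> h; apply/orP; left; apply: imset_f; rewrite inE.
    + by case/orP => /imsetP [y]; rewrite inE // => h [->].
    + by move=> h; apply/orP; right; apply: imset_f; rewrite inE.
    + by case/orP => /imsetP [y]; rewrite inE // => h [->].
  rewrite ES' !card_sum_split; apply: leq_add.
  + apply: (@leq_trans #|A :\ None|); last exact: subset_leq_card (subD1set _ _).
    apply: hSmin; first by rewrite !inE eqxx.
    move=> q Hq Hfix.
    have qN : q None = None by apply: Hfix; rewrite !inE eqxx.
    pose f (v : pend_vertex T t l) := if v is inl x then inl (q x) else v.
    have f_inj : injective f.
      by move=> [x|i] [y|j] //= [] /perm_inj ->.
    have qE z : (q z == None) = (z == None).
      case: (eqVneq z None) => [->|hz]; first by rewrite qN eqxx.
      apply/negbTE; apply: contra_neq hz => h; apply: (@perm_inj _ q); by rewrite h qN.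
    have Hp : is_aut (pend_adj e t l) (perm f_inj).
      move=> [x|i] [y|j]; rewrite !permE /f /pend_adj //.
      all: try exact: Hq.
    have := HS' _ Hp.
    have H1 : (forall x, x \in S' -> perm f_inj x = x).
      move=> [x|i]; rewrite permE //= => hx; congr inl.
      case: (eqVneq x None) => [->//|xN]; apply: Hfix.
      by rewrite !inE xN /= hx orbT.
    move=> /(_ H1) p1; apply/permP => x.
    have := congr1 (fun p : {perm pend_vertex T t l} => p (inl x)) p1; rewrite permE perm1 /f => [[]] ->; by rewrite perm1.
  + rewrite Bset cardsC1.
    case: (boolP ([set~ z0] \subset B)) => [/subset_leq_card|]; first by rewrite cardsC1.
    case/subsetPn => k _ kB.
    rewrite -(cardsC1 k); apply: subset_leq_card; apply/subsetP => i; rewrite !inE => ik.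
    apply: contraT => iB.
    pose p := tperm (inr i : pend_vertex T t l) (inr k).
    have pinl x : p (inl x) = inl x by rewrite tpermD.
    have pinr j : exists j', p (inr j) = inr j'.
      rewrite /p; case: tpermP => _; [by exists k|by exists i|by exists j].
    have Hp : is_aut (pend_adj e t l) p.
      move=> [x|j] [y|j']; rewrite ?pinl //;
        try (have [j1 ->] := pinr j); try (have [j2 ->] := pinr j'); rewrite ?pinl //.
    have H1 : forall x, x \in S' -> p x = x.
      move=> [x|j] hx; rewrite ?pinl // tpermD //; apply/negP => /eqP [] E; subst j.
        by move: iB; rewrite hx.
      by move: kB; rewrite /B ?inE hx.
    have := HS' _ Hp H1 => p1.
    have := congr1 (fun p : {perm pend_vertex T t l} => p (inr i)) p1; rewrite perm1 /p tpermL => [[]] E.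
    by move: ik; rewrite E eqxx.
Qed.
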